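(* Let $X$ be a finite connected poset and $F$ a field with $\mathrm{char}(F)\notin\{2,3\}$. Let $\varphi:I(X,F)\to I(X,F)$ be a bijective $F$-linear map with $\varphi(fgf)=\varphi(f)\varphi(g)\varphi(f)$ for all $f,g$. Then $\varphi=r\psi$, where $r\in\{-1,1\}$ and $\psi$ is either an automorphism or an anti-automorphism of $I(X,F)$.
   Context: $I(X,F)$ is the incidence algebra of the locally finite poset $X$ over $F$ (functions $f:X\times X\to F$ vanishing unless $x\le y$, with product $(fg)(x,y)=\sum_{x\le z\le y}f(x,z)g(z,y)$). A poset is connected if any two elements are joined by a finite sequence of elements in which consecutive elements are comparable. *)

(* Defs.v *)
From HB Require Import structures.
From mathcomp Require Import all_boot all_order all_algebra.
Set Implicit Arguments. Unset Strict Implicit. Unset Printing Implicit Defensive.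
Import Order.TTheory GRing.Theory.
Local Open Scope ring_scope.
Local Open Scope order_scope.

Section Incidence.
Variables (d : Order.disp_t) (X : finPOrderType d) (F : fieldType).

Definition is_incid (f : {ffun X * X -> F^o}) : bool :=
  [forall p : X * X, ~~ (p.1 <= p.2)%O ==> (f p == 0%R)].

Definition incid : {pred {ffun X * X -> F^o}} := fun f => is_incid f.

Record incalg := IncAlg { ifun :> {ffun X * X -> F^o}; ifunP : ifun \in incid }.

HB.instance Definition _ := [isSub for ifun].
HB.instance Definition _ := [Choice of incalg by <:].


Lemma incid_submod_closed : submod_closed incid.
Proof.
split; first by apply/forallP => p; rewrite ffunE eqxx implybT.
move=> a f g /forallP fP /forallP gP; apply/forallP => p; apply/implyP => np.
by rewrite !ffunE (eqP (implyP (fP p) np)) (eqP (implyP (gP p) np)) scaler0 add0r.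
Qed.

HB.instance Definition _ := GRing.isSubmodClosed.Build F _
  incid incid_submod_closed.
HB.instance Definition _ := [SubChoice_isSubLmodule of incalg by <:].

Definition imul_fun (f g : incalg) : {ffun X * X -> F^o} :=
  [ffun p : X * X => (\sum_(z : X | (p.1 <= z)%O && (z <= p.2)%O) f (p.1, z) * g (z, p.2))%R].

Lemma imul_incid f g : is_incid (imul_fun f g).
Proof.
apply/forallP => [[x y]]; apply/implyP => /= nxy; rewrite ffunE /=.
rewrite big_pred0 // => z; apply/negbTE; apply: contra nxy => /andP[h1 h2].
exact: le_trans h2.
Qed.

Definition imul (f g : incalg) : incalg := IncAlg (imul_incid f g).

Definition ione_fun : {ffun X * X -> F^o} := [ffun p : X * X => ((p.1 == p.2)%:R)%R].
Lemma ione_incid : is_incid ione_fun.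
Proof.
apply/forallP => [[x y]]; apply/implyP => /= nxy; rewrite ffunE /=.
by case: (x =P y) nxy => [->|_ _]; rewrite ?lexx.
Qed.
Definition ione : incalg := IncAlg ione_incid.

End Incidence.

Definition poset_connected d (X : finPOrderType d) : Prop :=
  forall x y : X, connect (fun a b : X => (a >=< b)%O) x y.

Definition inc_automorphism d (X : finPOrderType d) (F : fieldType)
    (psi : incalg X F -> incalg X F) : Prop :=
  [/\ linear psi, bijective psi,
      (forall f g, psi (imul f g) = imul (psi f) (psi g)) &
      psi (ione X F) = ione X F].

Definition inc_antiautomorphism d (X : finPOrderType d) (F : fieldType)
    (psi : incalg X F -> incalg X F) : Prop :=
  [/\ linear psi, bijective psi,
      (forall f g, psi (imul f g) = imul (psi g) (psi f)) &
      psi (ione X F) = ione X F].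

(* Main.v *)
Require Import Defs.
From HB Require Import structures.
From mathcomp Require Import all_boot all_order all_algebra.
Set Implicit Arguments. Unset Strict Implicit. Unset Printing Implicit Defensive.
Import Order.TTheory GRing.Theory.
Local Open Scope ring_scope.

Section Inc.
Variables (d : Order.disp_t) (X : finPOrderType d) (F : fieldType).
Local Notation A := (incalg X F).

Lemma incidP (f : A) (x y : X) : ~~ (x <= y)%O -> f (x, y) = 0.
Proof.
move=> h; have /forallP/(_ (x,y))/implyP/(_ h)/eqP // := ifunP f.
Qed.

Lemma inc_eq (f g : A) : (forall x y, f (x,y) = g (x,y)) -> f = g.
Proof. move=> h; apply: val_inj; apply/ffunP => -[x y]; exact: h. Qed.

Lemma addE (f g : A) x y : (f + g) (x,y) = f (x,y) + g (x,y).
Proof. by rewrite /= ffunE. Qed.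
Lemma scaleE (c : F) (f : A) x y : (c *: f) (x,y) = c * f (x,y).
Proof. by rewrite /= ffunE. Qed.
Lemma zeroE x y : (0 : A) (x,y) = 0.
Proof. by rewrite /= ffunE. Qed.
Lemma oppE (f : A) x y : (- f) (x,y) = - f (x,y).
Proof. by rewrite /= ffunE. Qed.
Lemma imulE (f g : A) x y : imul f g (x,y) = \sum_z f (x,z) * g (z,y).
Proof.
rewrite /= ffunE /= big_mkcond /=; apply: eq_bigr => z _.
case: ifP => // /negbT; rewrite negb_and => /orP[] h.
  by rewrite incidP // mul0r.
by rewrite (incidP g h) mulr0.
Qed.

Lemma ioneE x y : ione X F (x,y) = (x == y)%:R.
Proof. by rewrite /= ffunE. Qed.

Lemma imulA : associative (@imul d X F).
Proof.
move=> f g h; apply: inc_eq => x y; rewrite !imulE.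
under eq_bigr do rewrite imulE mulr_sumr.
under [RHS]eq_bigr do rewrite imulE mulr_suml.
rewrite exchange_big; apply: eq_bigr => z _; apply: eq_bigr => w _.
by rewrite mulrA.
Qed.

Lemma imul1l : left_id (ione X F) (@imul d X F).
Proof.
move=> f; apply: inc_eq => x y; rewrite imulE (bigD1 x) //= big1 ?addr0.
  by rewrite ioneE eqxx mul1r.
by move=> z /negbTE zx; rewrite ioneE eq_sym zx mul0r.
Qed.

Lemma imul1r : right_id (ione X F) (@imul d X F).
Proof.
move=> f; apply: inc_eq => x y; rewrite imulE (bigD1 y) //= big1 ?addr0.
  by rewrite ioneE eqxx mulr1.
by move=> z /negbTE zx; rewrite ioneE zx mulr0.
Qed.

Lemma imulDl : left_distributive (@imul d X F) +%R.
Proof.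
move=> f g h; apply: inc_eq => x y; rewrite addE !imulE -big_split /=.
by apply: eq_bigr => z _; rewrite addE mulrDl.
Qed.

Lemma imulDr : right_distributive (@imul d X F) +%R.
Proof.
move=> f g h; apply: inc_eq => x y; rewrite addE !imulE -big_split /=.
by apply: eq_bigr => z _; rewrite addE mulrDr.
Qed.

HB.instance Definition _ := GRing.Zmodule_isPzRing.Build A imulA imul1l imul1r imulDl imulDr.

Lemma mulE (f g : A) : f * g = imul f g. Proof. by []. Qed.
Lemma oneE : (1 : A) = ione X F. Proof. by []. Qed.

Lemma scalerAl' (c : F) (f g : A) : c *: (f * g) = (c *: f) * g.
Proof. apply: inc_eq => x y; rewrite scaleE !imulE mulr_sumr; apply: eq_bigr => z _; by rewrite scaleE mulrA. Qed.
Lemma scalerAr' (c : F) (f g : A) : c *: (f * g) = f * (c *: g).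
Proof. apply: inc_eq => x y; rewrite scaleE !imulE mulr_sumr; apply: eq_bigr => z _; by rewrite scaleE mulrCA. Qed.

Definition eu_fun (x y : X) : {ffun X * X -> F^o} :=
  [ffun p : X * X => (((p.1 == x) && (p.2 == y)) && (x <= y)%O)%:R].
Lemma eu_incid x y : is_incid (eu_fun x y).
Proof.
apply/forallP => -[p q]; apply/implyP => /= npq; rewrite ffunE /=.
move: npq; case: (p =P x) => [->|] //=; case: (q =P y) => [->|] //=.
by move/negbTE ->.
Qed.
Definition eu x y : A := IncAlg (eu_incid x y).

Lemma euE x y p q : eu x y (p,q) = (((p == x) && (q == y)) && (x <= y)%O)%:R.
Proof. by rewrite /= ffunE. Qed.

Lemma sumE I (r : seq I) (P : pred I) (G : I -> A) p q :
  (\sum_(i <- r | P i) G i) (p,q) = \sum_(i <- r | P i) G i (p,q).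
Proof.
elim/big_rec2: _ => [|i s t _ IH]; first by rewrite zeroE.
by rewrite addE IH.
Qed.

Lemma nz_entry (f : A) : f != 0 -> exists p q, f (p,q) != 0.
Proof.
move=> nz; case: (boolP [exists pq : X * X, f pq != 0]) => [/existsP [[p q] h]|/existsPn h].
  by exists p, q.
case/negP: nz; apply/eqP/inc_eq => p q; rewrite zeroE; apply/eqP.
by move: (h (p,q)); rewrite negbK.
Qed.

Lemma eu_nz x y : (x <= y)%O -> eu x y != 0.
Proof.
move=> le; apply/eqP => /(congr1 (fun f : A => f (x,y))).
by rewrite euE zeroE !eqxx le /= => /eqP; rewrite oner_eq0.
Qed.

Lemma eu0 x y : ~~ (x <= y)%O -> eu x y = 0.
Proof. move=> h; apply: inc_eq => p q; by rewrite euE zeroE (negbTE h) andbF. Qed.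

Lemma eu_mul x y u v : (x <= y)%O -> (u <= v)%O ->
  eu x y * eu u v = if y == u then eu x v else 0.
Proof.
move=> lxy luv; apply: inc_eq => p q; rewrite mulE imulE.
rewrite (bigD1 y) //= big1 ?addr0; last first.
  by move=> z /negbTE zy; rewrite !euE zy andbF mul0r.
rewrite !euE eqxx lxy luv !andbT.
case: (y =P u) => [yu|/eqP yu]; last by rewrite zeroE mulr0.
subst u; rewrite euE (le_trans lxy luv) andbT -natrM; congr (_%:R).
by case: (p == x); case: (q == v).
Qed.

Lemma inc_decomp (f : A) : f = \sum_(pq : X * X) (f pq : F) *: eu pq.1 pq.2.
Proof.
apply: inc_eq => p q; rewrite sumE (bigD1 (p,q)) // big1 ?addr0.
  rewrite scaleE euE !eqxx /=; case: (boolP (p <= q)%O) => h /=; first by rewrite mulr1 addr0.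
  by rewrite mulr0 addr0 incidP.
move=> [a b] ne; rewrite scaleE euE; rewrite andTb in ne.
case: (p =P a) ne => [pa|_ _]; last by rewrite /= mulr0.
case: (q =P b) => [qb|_ _]; last by rewrite /= mulr0.
by subst; rewrite eqxx.
Qed.

Lemma one_sum : (1 : A) = \sum_z eu z z.
Proof.
apply: inc_eq => p q; rewrite sumE oneE ioneE (bigD1 p) //= big1 ?addr0.
  by rewrite euE eqxx lexx andbT eq_sym.
by move=> z /negbTE zp; rewrite euE eq_sym zp.
Qed.

Lemma mul_euE (a : A) z p q : (a * eu z z) (p,q) = a (p,z) * (q == z)%:R.
Proof.
rewrite mulE imulE (bigD1 z) //= big1 ?addr0.
  by rewrite euE eqxx lexx !andbT.
by move=> w /negbTE wz; rewrite euE wz mulr0.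
Qed.

Lemma eu_mulE (b : A) z p q : (eu z z * b) (p,q) = (p == z)%:R * b (z,q).
Proof.
rewrite mulE imulE (bigD1 z) //= big1 ?addr0.
  by rewrite euE eqxx lexx !andbT.
by move=> w /negbTE wz; rewrite euE eq_sym wz andbF mul0r.
Qed.

Lemma mul_eu_mulE (a b : A) z p q : (a * eu z z * b) (p,q) = a (p,z) * b (z,q).
Proof.
rewrite mulE imulE (bigD1 z) //= big1 ?addr0.
  by rewrite mul_euE eqxx mulr1.
by move=> w /negbTE wz; rewrite mul_euE wz mulr0 mul0r.
Qed.

Lemma eu_sand (a : A) z : eu z z * a * eu z z = (a (z,z) : F) *: eu z z.
Proof.
apply: inc_eq => p q; rewrite mul_euE eu_mulE scaleE euE lexx andbT.
case: (p == z); case: (q == z); by rewrite ?mul0r ?mulr0 ?mul1r ?mulr1.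
Qed.

Lemma exists_z (E : A) : E != 0 -> E * E = E ->
  (forall b, exists c, E * b * E = c *: E) ->
  exists z, exists c : F, c != 0 /\ E = c *: (E * eu z z * E).
Proof.
move=> nz idem oned.
case: (boolP [exists z, E * eu z z * E != 0]) => [/existsP [z h]|/existsPn h].
  have [c hc] := oned (eu z z).
  have c0 : c != 0 by apply: contra h; rewrite hc => /eqP ->; rewrite scale0r.
  exists z, c^-1; split; first by rewrite invr_eq0.
  by rewrite hc scalerA mulVf // scale1r.
case/negP: nz; apply/eqP.
rewrite -idem -{2}[E]mul1r mulrA one_sum mulr_sumr mulr_suml big1 // => z _.
by apply/eqP; move: (h z); rewrite negbK.
Qed.

Lemma ZP (E : A) : E != 0 -> E * E = E ->
  (forall b, exists c, E * b * E = c *: E) ->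
  forall a b, a * E != 0 -> E * b != 0 -> a * E * b != 0.
Proof.
move=> nz idem oned a b ha hb.
have [z [c [c0 hE]]] := exists_z nz idem oned.
have eqa : a * E = c *: (a * E * eu z z) * E.
  by rewrite {1}hE -scalerAr' !mulrA scalerAl'.
have eqb : E * b = c *: (E * (eu z z * (E * b))).
  by rewrite {1}hE -scalerAl' !mulrA.
have ha' : a * E * eu z z != 0.
  by apply: contra ha => /eqP h; rewrite eqa h scaler0 mul0r.
have hb' : eu z z * (E * b) != 0.
  by apply: contra hb => /eqP h; rewrite eqb h mulr0 scaler0.
have [p [q1 hp]] := nz_entry ha'; have [q2 [q hq]] := nz_entry hb'.
rewrite mul_euE in hp; rewrite eu_mulE in hq.
have q1z : q1 = z by apply/eqP; apply: contraNT hp => /negbTE ->; rewrite mulr0.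
have q2z : q2 = z by apply/eqP; apply: contraNT hq => /negbTE ->; rewrite mul0r.
rewrite q1z eqxx mulr1 in hp; rewrite q2z eqxx mul1r in hq.
have -> : a * E * b = c *: ((a * E) * eu z z * (E * b)).
  by rewrite {1}hE -scalerAr' -scalerAl' !mulrA.
apply/eqP => /(congr1 (fun f : A => f (p,q))).
rewrite scaleE mul_eu_mulE zeroE => /eqP.
by rewrite !mulf_eq0 (negbTE c0) (negbTE hp) (negbTE hq).
Qed.

End Inc.
Section Jordan.
Variables (d : Order.disp_t) (X : finPOrderType d) (F : fieldType).
Local Notation A := (incalg X F).
Local Notation eu := (@eu d X F).
Variable psi : A -> A.
Hypothesis lin : linear psi.
Hypothesis inj : injective psi.
Hypothesis surj : forall b, exists a, psi a = b.
Hypothesis psi1 : psi 1 = 1.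
Hypothesis trip : forall f g, psi (f * g * f) = psi f * psi g * psi f.

Lemma psi0 : psi 0 = 0.
Proof. by have := lin (-1) 0 0; rewrite scaler0 addr0 scaleN1r addNr. Qed.
Lemma psiD u v : psi (u + v) = psi u + psi v.
Proof. by have := lin 1 u v; rewrite !scale1r. Qed.
Lemma psiZ (a : F) u : psi (a *: u) = a *: psi u.
Proof. by have := lin a u 0; rewrite !addr0 psi0 addr0. Qed.
Lemma psi_sum I (r : seq I) (P : pred I) (G : I -> A) :
  psi (\sum_(i <- r | P i) G i) = \sum_(i <- r | P i) psi (G i).
Proof.
elim/big_rec2: _ => [|i s t _ <-]; first exact: psi0.
by rewrite psiD.
Qed.

Lemma J1 f : psi (f * f) = psi f * psi f.
Proof. by have := trip f 1; rewrite !mulr1 psi1 mulr1. Qed.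

Lemma J2 f g : psi (f * g + g * f) = psi f * psi g + psi g * psi f.
Proof.
have e : forall a b : A, (a + b) * (a + b) = a * a + (a * b + b * a) + b * b.
  by move=> a b; rewrite mulrDl !mulrDr !addrA.
have h := J1 (f + g); rewrite e psiD psiD [psi (f + g)]psiD e !J1 in h.
by move: h; move/addIr/addrI.
Qed.

Lemma J3 f g h : psi (f * g * h + h * g * f) = psi f * psi g * psi h + psi h * psi g * psi f.
Proof.
have e : forall a b : A, (a + b) * g * (a + b) = a * g * a + (a * g * b + b * g * a) + b * g * b.
  by move=> a b; rewrite mulrDl !mulrDr !mulrDl !addrA; congr (_ + _); rewrite addrAC.
have e' : forall a b : A, (a + b) * psi g * (a + b) = a * psi g * a + (a * psi g * b + b * psi g * a) + b * psi g * b.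
  by move=> a b; rewrite mulrDl !mulrDr !mulrDl !addrA; congr (_ + _); rewrite addrAC.
have H := trip (f + h) g; rewrite e psiD psiD [psi (f + h)]psiD e' !trip in H.
by move: H; move/addIr/addrI.
Qed.

Definition E z := psi (eu z z).
Definition P x y := psi (eu x y).

Lemma eu_idem z : eu z z * eu z z = eu z z.
Proof. by rewrite eu_mul // eqxx. Qed.

Lemma eu_orth x y : x != y -> eu x x * eu y y = 0.
Proof. by move=> /negbTE h; rewrite eu_mul // h. Qed.

Lemma E_idem z : E z * E z = E z.
Proof. by rewrite /E -J1 eu_idem. Qed.

Lemma E_orth x y : x != y -> E x * E y = 0.
Proof.
move=> xy.
have h1 : E x * E y + E y * E x = 0.
  by rewrite /E -J2 eu_orth // eu_orth 1?eq_sym // addr0 psi0.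
have h2 : E x * E y * E x = 0.
  by rewrite /E -trip eu_orth // mul0r psi0.
have := congr1 (fun a => E x * a) h1; rewrite mulrDr mulr0 !mulrA E_idem h2 addr0.
by [].
Qed.

Lemma EE0 x y a : x != y -> a * E x * E y = 0.
Proof. by move=> h; rewrite -mulrA E_orth // mulr0. Qed.
Lemma EEi x a : a * E x * E x = a * E x.
Proof. by rewrite -mulrA E_idem. Qed.

Lemma P_nz x y : (x <= y)%O -> P x y != 0.
Proof. by move=> h; apply: contra (eu_nz F h) => /eqP h0; apply/eqP; apply: inj; rewrite psi0. Qed.

Lemma E_nz z : E z != 0.
Proof. exact: P_nz. Qed.

Lemma E_oned z b : exists c, E z * b * E z = c *: E z.
Proof.
have [a <-] := surj b; exists (a (z,z)).
by rewrite /E -trip eu_sand psiZ.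
Qed.

Lemma E_ZP z a b : a * E z != 0 -> E z * b != 0 -> a * E z * b != 0.
Proof. apply: ZP; [exact: E_nz | exact: E_idem | exact: E_oned]. Qed.

Hypothesis conn : poset_connected X.

Lemma J2e x y u v : (x <= y)%O -> (u <= v)%O ->
  psi ((if y == u then eu x v else 0) + (if v == x then eu u y else 0)) =
  P x y * P u v + P u v * P x y.
Proof. by move=> h1 h2; rewrite -(eu_mul F h1 h2) -(eu_mul F h2 h1); exact: J2. Qed.

Lemma peirce x y : (x < y)%O -> P x y = E x * P x y * E y + E y * P x y * E x.
Proof.
move=> h; have lxy := ltW h.
rewrite /P /E -J3; congr psi.
rewrite !eu_mul // eqxx eq_sym lt_eqF // mul0r addr0 eu_mul // eqxx //.
Qed.

Lemma dich x y : (x < y)%O ->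
  (P x y == E x * P x y * E y) || (P x y == E y * P x y * E x).
Proof.
move=> h; have xy : x != y by rewrite lt_eqF.
have yx : y != x by rewrite eq_sym.
have hP := peirce h.
have PP : P x y * P x y = 0.
  by rewrite /P -J1 eu_mul ?(ltW h) // (negbTE yx) psi0.
have ExP : E x * P x y = E x * P x y * E y.
  by rewrite {1}hP mulrDr !mulrA E_idem E_orth // !mul0r addr0.
have PEx : P x y * E x = E y * P x y * E x.
  by rewrite {1}hP mulrDl EE0 // EEi add0r.
have UV : (E x * P x y * E y) * (E y * P x y * E x) = 0.
  by rewrite -ExP -PEx !mulrA -(mulrA (E x)) PP mulr0 mul0r.
case: (boolP (E x * P x y * E y == 0)) => U0.
  by apply/orP; right; rewrite {1}hP (eqP U0) add0r.
case: (boolP (E y * P x y * E x == 0)) => V0.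
  by apply/orP; left; rewrite {1}hP (eqP V0) addr0.
exfalso.
have a1 : E x * P x y * E y * E y = E x * P x y * E y := EEi _ _.
have a2 : E y * (E y * P x y * E x) = E y * P x y * E x by rewrite !mulrA E_idem.
have := @E_ZP y (E x * P x y * E y) (E y * P x y * E x).
by rewrite a1 a2 UV eqxx => /(_ U0 V0).
Qed.

Lemma mixed x y u v : (x < y)%O -> (u < v)%O ->
  P x y = E x * P x y * E y -> P u v = E v * P u v * E u ->
  [|| x == u, x == v, y == u | y == v] -> False.
Proof.
move=> hxy huv hP hQ H.
have lxy := ltW hxy; have luv := ltW huv.
have Pnz := P_nz lxy; have Qnz := P_nz luv.
have nxy : x != y by rewrite lt_eqF.
have nuv : u != v by rewrite lt_eqF.
have h2 := J2e lxy luv.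
have [xu|xu] := eqVneq x u.
  subst u; have [yv|yv] := eqVneq y v.
    subst v; apply: (negP Pnz); apply/eqP.
    by rewrite hP hQ !mulrA E_orth // !mul0r.
  rewrite eq_sym (negbTE nxy) eq_sym (negbTE nuv) addr0 psi0 in h2.
  have PQ : P x y * P x v = 0 by rewrite [P x y]hP [P x v]hQ !mulrA EE0 // !mul0r.
  rewrite PQ add0r in h2.
  have QE : P x v * E x = P x v by rewrite [in LHS]hQ EEi -hQ.
  have EP : E x * P x y = P x y by rewrite [in LHS]hP !mulrA E_idem -hP.
  have := @E_ZP x (P x v) (P x y).
  by rewrite QE EP -h2 eqxx => /(_ Qnz Pnz).
have [xv|xv] := eqVneq x v.
  subst v.
  have uy : (u < y)%O := lt_trans huv hxy.
  rewrite gt_eqF // eqxx add0r in h2.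
  have {}h2 : P u y = P x y * P u x + P u x * P x y := h2.
  apply: (negP (P_nz (ltW uy))); apply/eqP; rewrite h2.
  by rewrite [P x y]hP [P u x]hQ !mulrA !EE0 // ?mul0r ?addr0 // eq_sym.
have [yu|yu] := eqVneq y u.
  subst u.
  have xv' : (x < v)%O := lt_trans hxy huv.
  rewrite eqxx gt_eqF // addr0 in h2.
  have {}h2 : P x v = P x y * P y v + P y v * P x y := h2.
  apply: (negP (P_nz (ltW xv'))); apply/eqP; rewrite h2.
  by rewrite [P x y]hP [P y v]hQ !mulrA !EE0 // ?mul0r ?addr0 // eq_sym.
move: H; rewrite (negbTE xu) (negbTE xv) (negbTE yu) /= => /eqP yv; subst v.
rewrite (negbTE yu) eq_sym (negbTE nxy) addr0 psi0 in h2.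
have QP : P u y * P x y = 0.
  by rewrite [P u y]hQ [P x y]hP !mulrA EE0 1?eq_sym // !mul0r.
rewrite QP addr0 in h2.
have PE : P x y * E y = P x y by rewrite [in LHS]hP EEi -hP.
have EQ : E y * P u y = P u y by rewrite [in LHS]hQ !mulrA E_idem -hQ.
have := @E_ZP y (P x y) (P u y).
by rewrite PE EQ -h2 eqxx => /(_ Pnz Qnz).
Qed.

Definition anti x y := P x y == E y * P x y * E x.
Definition hom x y := P x y == E x * P x y * E y.
Definition allanti w := forall x y, (x < y)%O -> (x == w) || (y == w) -> anti x y.

Lemma local_anti w x0 y0 : (x0 < y0)%O -> (x0 == w) || (y0 == w) -> anti x0 y0 -> allanti w.
Proof.
move=> h0 w0 a0 x y hxy wxy.
case/orP: (dich hxy) => [hh|//]; exfalso.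
apply: (mixed hxy h0 (eqP hh) (eqP a0)).
by case/orP: wxy => /eqP ->; case/orP: w0 => /eqP ->; rewrite eqxx ?orbT.
Qed.

Lemma prop_anti a b : connect (fun a b : X => (a >=< b)%O) a b -> allanti a -> allanti b.
Proof.
case/connectP => p; elim: p a => [|c p IH] a /=; first by move=> _ ->.
case/andP => ac pth lst Ha; apply: (IH c pth lst).
have [ec|nec] := eqVneq a c; first by subst c.
move: ac; rewrite /Order.comparable; case/orP => hac.
  have lt : (a < c)%O by rewrite lt_neqAle nec hac.
  by apply: (local_anti lt _ (Ha a c lt _)); rewrite eqxx ?orbT.
have lt : (c < a)%O by rewrite lt_neqAle eq_sym nec hac.
by apply: (local_anti lt _ (Ha c a lt _)); rewrite eqxx ?orbT.
Qed.

Lemma basis_hom (H : forall x y, (x < y)%O -> hom x y) x y u v :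
  psi (eu x y * eu u v) = P x y * P u v.
Proof.
case: (boolP (x <= y)%O) => lxy; last by rewrite /P eu0 // mul0r psi0 mul0r.
case: (boolP (u <= v)%O) => luv; last by rewrite /P [eu u v]eu0 // mulr0 psi0 mulr0.
have hom' : forall a b, (a <= b)%O -> P a b = E a * P a b * E b.
  move=> a b lab; have [eab|nab] := eqVneq a b.
    by subst b; change (E a = E a * E a * E a); rewrite !E_idem.
  by apply/eqP; apply: H; rewrite lt_neqAle nab lab.
rewrite eu_mul //.
have [yu|yu] := eqVneq y u; last first.
  by rewrite psi0 [P x y]hom' // [P u v]hom' // !mulrA EE0 // !mul0r.
subst u; have h2 := J2e lxy luv; rewrite eqxx in h2.
have [vx|vx] := eqVneq v x.
  subst v; have exy : x = y by apply/le_anti; rewrite lxy luv.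
  by subst y; change (E x = E x * E x); rewrite E_idem.
rewrite (negbTE vx) addr0 in h2; rewrite h2.
have QP : P y v * P x y = 0.
  by rewrite [P y v]hom' // [P x y]hom' // !mulrA EE0 // !mul0r.
by rewrite QP addr0.
Qed.

Lemma basis_anti (H : forall x y, (x < y)%O -> anti x y) x y u v :
  psi (eu x y * eu u v) = P u v * P x y.
Proof.
case: (boolP (x <= y)%O) => lxy; last by rewrite /P eu0 // mul0r psi0 mulr0.
case: (boolP (u <= v)%O) => luv; last by rewrite /P [eu u v]eu0 // mulr0 psi0 mul0r.
have anti' : forall a b, (a <= b)%O -> P a b = E b * P a b * E a.
  move=> a b lab; have [eab|nab] := eqVneq a b.
    by subst b; change (E a = E a * E a * E a); rewrite !E_idem.
  by apply/eqP; apply: H; rewrite lt_neqAle nab lab.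
rewrite eu_mul //.
have [yu|yu] := eqVneq y u; last first.
  by rewrite psi0 [P x y]anti' // [P u v]anti' // !mulrA EE0 1?eq_sym // !mul0r.
subst u; have h2 := J2e lxy luv; rewrite eqxx in h2.
have [vx|vx] := eqVneq v x.
  subst v; have exy : x = y by apply/le_anti; rewrite lxy luv.
  by subst y; change (E x = E x * E x); rewrite E_idem.
rewrite (negbTE vx) addr0 in h2; rewrite h2.
have PQ : P x y * P y v = 0.
  by rewrite [P y v]anti' // [P x y]anti' // !mulrA EE0 1?eq_sym // !mul0r.
by rewrite PQ add0r.
Qed.

Lemma mul_decomp (f g : A) : f * g =
  \sum_(p : X * X) \sum_(q : X * X) ((f p : F) * (g q : F)) *: (eu p.1 p.2 * eu q.1 q.2).
Proof.
rewrite [f in LHS]inc_decomp [g in LHS]inc_decomp mulr_suml; apply: eq_bigr => p _.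
rewrite mulr_sumr; apply: eq_bigr => q _.
by rewrite -scalerAl' -scalerAr' scalerA.
Qed.

Lemma ext_hom : (forall x y u v, psi (eu x y * eu u v) = P x y * P u v) ->
  forall f g, psi (f * g) = psi f * psi g.
Proof.
move=> B f g.
rewrite mul_decomp [f in RHS]inc_decomp [g in RHS]inc_decomp !psi_sum mulr_suml.
apply: eq_bigr => p _; rewrite psi_sum psiZ mulr_sumr; apply: eq_bigr => q _.
by rewrite !psiZ B -scalerAl' -scalerAr' scalerA.
Qed.

Lemma ext_anti : (forall x y u v, psi (eu x y * eu u v) = P u v * P x y) ->
  forall f g, psi (f * g) = psi g * psi f.
Proof.
move=> B f g.
rewrite mul_decomp [f in RHS]inc_decomp [g in RHS]inc_decomp !psi_sum mulr_sumr.
apply: eq_bigr => p _; rewrite psi_sum psiZ mulr_suml; apply: eq_bigr => q _.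
by rewrite !psiZ B -scalerAl' -scalerAr' scalerA mulrC.
Qed.

Lemma jordan_main :
  (forall f g, psi (f * g) = psi f * psi g) \/ (forall f g, psi (f * g) = psi g * psi f).
Proof.
case: (boolP [exists x, exists y, (x < y)%O && anti x y]).
  move/existsP => [x0 /existsP [y0 /andP [h0 a0]]]; right.
  have A0 : allanti x0 by apply: (local_anti h0 _ a0); rewrite eqxx.
  have Hall : forall x y, (x < y)%O -> anti x y.
    by move=> x y hxy; apply: (prop_anti (conn x0 x) A0 hxy); rewrite eqxx.
  by apply: ext_anti => x y u v; apply: basis_anti.
move/existsPn => Hn; left.
have Hall : forall x y, (x < y)%O -> hom x y.
  move=> x y hxy; case/orP: (dich hxy) => // ha.
  by have := Hn x; move/existsPn/(_ y); rewrite hxy /= => /negP nh; exfalso; exact: nh ha.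
by apply: ext_hom => x y u v; apply: basis_hom.
Qed.

End Jordan.
Section Final.
Variables (d : Order.disp_t) (X : finPOrderType d) (F : fieldType).
Local Notation A := (incalg X F).

Lemma mul_eu2E (a : A) x y p q : (x <= y)%O -> (a * eu F x y) (p,q) = a (p,x) * (q == y)%:R.
Proof.
move=> lxy; rewrite mulE imulE (bigD1 x) //= big1 ?addr0.
  by rewrite euE eqxx lxy !andbT.
by move=> w /negbTE wz; rewrite euE wz mulr0.
Qed.

Lemma eu_mul2E (b : A) x y p q : (x <= y)%O -> (eu F x y * b) (p,q) = (p == x)%:R * b (y,q).
Proof.
move=> lxy; rewrite mulE imulE (bigD1 y) //= big1 ?addr0.
  by rewrite euE eqxx lxy !andbT.
by move=> w /negbTE wz; rewrite euE wz andbF mul0r.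
Qed.

Lemma central_scalar (e : A) : poset_connected X -> (forall h, h * e = e * h) ->
  e * e = 1 -> exists c : F, c * c = 1 /\ e = c *: (1 : A).
Proof.
move=> conn comm ee.
have off : forall x y, x != y -> e (x,y) = 0.
  move=> x y xy; have := congr1 (fun f : A => f (x,y)) (comm (eu F x x)).
  by rewrite /= mul_euE eu_mulE eqxx eq_sym (negbTE xy) mulr0 mul1r => <-.
have dg : forall x y, (x <= y)%O -> e (x,x) = e (y,y).
  move=> x y lxy; have := congr1 (fun f : A => f (x,y)) (comm (eu F x y)).
  by rewrite /= mul_eu2E // eu_mul2E // !eqxx mulr1 mul1r.
have cn : forall a b, e (a,a) = e (b,b).
  move=> a b; case/connectP: (conn a b) => p; elim: p a => [|c p IH] a /=.
    by move=> _ ->.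
  case/andP => ac pth lst; rewrite -(IH c pth lst).
  by move: ac; rewrite /Order.comparable; case/orP => h; [apply: dg | apply/esym/dg].
case: (pickP (fun _ : X => true)) => [x0 _|none]; last first.
  exists 1; split; first by rewrite mulr1.
  by apply: inc_eq => p; have := none p.
have he : e = (e (x0,x0) : F) *: (1 : A).
  apply: inc_eq => p q; rewrite scaleE oneE ioneE.
  have [pq|pq] := eqVneq p q; first by subst q; rewrite mulr1 (cn p x0).
  by rewrite mulr0 off.
exists (e (x0,x0) : F); split => //.
have := congr1 (fun f : A => f (x0,x0)) ee.
rewrite {1 2}he -scalerAl' -scalerAr' scalerA mulr1 in ee.
have h : (((e (x0,x0) : F) * e (x0,x0)) *: (1 : A)) (x0,x0) = (1 : A) (x0,x0) by rewrite ee.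
by rewrite scaleE oneE ioneE eqxx mulr1 in h.
Qed.

End Final.

Unset Implicit Arguments.
Set Strict Implicit.

Theorem proposition6p5 (d : Order.disp_t) (X : finPOrderType d) (F : fieldType)
    (phi : incalg X F -> incalg X F) :
  poset_connected X ->
  2%N \notin [pchar F] -> 3%N \notin [pchar F] ->
  linear phi -> bijective phi ->
  (forall f g : incalg X F,
      phi (imul (imul f g) f) = imul (imul (phi f) (phi g)) (phi f)) ->
  exists r : F, (r = 1 \/ r = -1) /\
    exists psi : incalg X F -> incalg X F,
      (inc_automorphism psi \/ inc_antiautomorphism psi) /\
      forall f, phi f = r *: psi f.
Proof.
move=> conn _ _ lin [phiinv c1 c2] tripphi.
have trip' : forall f g : incalg X F, phi (f * g * f) = phi f * phi g * phi f := tripphi.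
have key g : phi g = phi 1 * phi g * phi 1 by rewrite -trip' mulr1 mul1r.
have sand h : h = phi 1 * h * phi 1 by have := key (phiinv h); rewrite c2.
have ee : phi 1 * phi 1 = 1 by move: (sand 1); rewrite mulr1 => /esym.
have comm h : h * phi 1 = phi 1 * h by rewrite {1}(sand h) -mulrA ee mulr1.
have [c [cc he]] := central_scalar conn comm ee.
pose psi := fun f => c *: phi f.
have linp : linear psi.
  by move=> a u v; rewrite /psi lin scalerDr !scalerA mulrC.
have injp : injective psi.
  move=> u v /(congr1 (fun w => c *: w)); rewrite /psi !scalerA cc !scale1r.
  exact: (can_inj c1).
have surjp : forall b, exists a, psi a = b.
  by move=> b; exists (phiinv (c *: b)); rewrite /psi c2 scalerA cc scale1r.
have psi1 : psi 1 = 1 by rewrite /psi he scalerA cc scale1r.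
have tripp : forall f g, psi (f * g * f) = psi f * psi g * psi f.
  move=> f g; rewrite /psi trip' -scalerAl' -scalerAr' -scalerAl' -scalerAr' !scalerA.
  by rewrite -scalerAl' scalerA cc mul1r.
have bijp : bijective psi.
  exists (fun b => phiinv (c *: b)) => f; rewrite /psi ?scalerA ?cc ?scale1r ?c1 //.
  by rewrite c2 scalerA cc scale1r.
exists c; split.
  by have := sqrf_eq1 c; rewrite expr2 cc eqxx => /esym/orP[] /eqP; [left|right].
exists psi; split; last by move=> f; rewrite /psi scalerA cc scale1r.
case: (jordan_main linp injp surjp psi1 tripp conn) => hm; [left|right]; split => //.
Qed.
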